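(* Let $\mathcal{C}$ be a small category, $n\ge0$, and let $M$ be an indecomposable $k\widetilde{\mathcal{E}}^{\mathcal{C}}_n$-module. Then for every $0\le i\le n+1$ the $k\widetilde{\mathcal{E}}^{\mathcal{C}}_{n+1}$-module $\partial_i^*M$ is indecomposable. Likewise, if $M$ is an indecomposable $k\mathcal{C}$-module, then $\partial_0^*M$ and $\partial_1^*M$ are indecomposable $k\widetilde{\mathcal{G}}^{\mathcal{C}}_1$-modules.
   Context: A module over a small category is a functor to finite-dimensional $k$-vector spaces ($k$ a field); indecomposable means nonzero and not isomorphic to a direct sum of two nonzero modules; $F^*M=M\circ F$. $\widetilde{\mathcal{E}}^{\mathcal{C}}_n=\mathcal{C}^{[n]}$ has objects strings $x_0\xrightarrow{u_1}\cdots\xrightarrow{u_n}x_n$ of morphisms of $\mathcal{C}$ and morphisms commutative ladders $(f_0,\dots,f_n)$; the face functors $\partial_i:\widetilde{\mathcal{E}}^{\mathcal{C}}_{n+1}\to\widetilde{\mathcal{E}}^{\mathcal{C}}_n$ ($0\le i\le n+1$) delete $x_i$ (dropping the first or last morphism for $i=0$, $i=n+1$, and composing $u_{i+1}u_i$ otherwise) and delete $f_i$. $\widetilde{\mathcal{G}}^{\mathcal{C}}_1$ is the category with objects all morphisms $u:a\to b$ of $\mathcal{C}$ and morphisms $[u]\to[v]$ ($v:c\to d$) the identities and the pairs $(w\circ u,\;v\circ w)$ for $w:b\to c$; $\partial_0[u]=b$, $\partial_1[u]=a$. *)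

(* Defs.v *)
From HB Require Import structures.
From mathcomp Require Import all_boot all_order all_algebra.
From Stdlib Require Import ProofIrrelevance FunctionalExtensionality.
Set Implicit Arguments. Unset Strict Implicit. Unset Printing Implicit Defensive.
Import GRing.Theory.
Local Open Scope ring_scope.

Record category := Cat {
  Obj :> Type;
  Hom : Obj -> Obj -> Type;
  idm : forall x, Hom x x;
  cmp : forall x y z, Hom y z -> Hom x y -> Hom x z;
  comp1f : forall x y (f : Hom x y), cmp (idm y) f = f;
  compf1 : forall x y (f : Hom x y), cmp f (idm x) = f;
  compA : forall x y z w (h : Hom z w) (g : Hom y z) (f : Hom x y),
      cmp h (cmp g f) = cmp (cmp h g) f
}.
Arguments Hom {c}.
Arguments idm {c}.
Arguments cmp {c x y z}.

Record functor (D E : category) := Functor {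
  fobj :> D -> E;
  fmap : forall x y, Hom x y -> Hom (fobj x) (fobj y);
  fmap_id : forall x, fmap (idm x) = idm (fobj x);
  fmap_comp : forall x y z (g : Hom y z) (f : Hom x y),
      fmap (cmp g f) = cmp (fmap g) (fmap f)
}.
Arguments fmap {D E} _ {x y}.

(* Modules: functors to finite-dimensional k-vector spaces, presented  *)
(* in bases: M x = k^(mdim x) (row vectors), and a morphism f : x -> y  *)
(* acts by v |-> v *m mact f, so functoriality reads                    *)
(* mact (g o f) = mact f *m mact g.                                     *)
Record module (k : fieldType) (D : category) := Module {
  mdim : D -> nat;
  mact : forall x y, Hom x y -> 'M[k]_(mdim x, mdim y);
  mact_id : forall x, mact (idm x) = 1%:M;
  mact_comp : forall x y z (g : Hom y z) (f : Hom x y),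
      mact (cmp g f) = mact f *m mact g
}.
Arguments mdim {k D}.
Arguments mact {k D} m {x y}.

Section Modules.
Variables (k : fieldType) (D : category).

Definition mod_iso (M N : module k D) : Prop :=
  exists (phi : forall x, 'M[k]_(mdim M x, mdim N x))
         (psi : forall x, 'M[k]_(mdim N x, mdim M x)),
    (forall x, phi x *m psi x = 1%:M /\ psi x *m phi x = 1%:M) /\
    (forall x y (f : Hom x y), mact M f *m phi y = phi x *m mact N f).

Definition mod_nonzero (M : module k D) : Prop := exists x, (0 < mdim M x)%N.

Lemma dsum_id (A B : module k D) x :
  block_mx (mact A (idm x)) 0 0 (mact B (idm x)) = 1%:M.
Proof. by rewrite !mact_id -scalar_mx_block. Qed.

Lemma dsum_comp (A B : module k D) x y z (g : Hom y z) (f : Hom x y) :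
  block_mx (mact A (cmp g f)) 0 0 (mact B (cmp g f)) =
  block_mx (mact A f) 0 0 (mact B f) *m block_mx (mact A g) 0 0 (mact B g).
Proof.
by rewrite mulmx_block !mact_comp !mulmx0 !mul0mx !addr0 !add0r.
Qed.

Definition dsum (A B : module k D) : module k D :=
  @Module k D (fun x => (mdim A x + mdim B x)%N)
    (fun x y f => block_mx (mact A f) 0 0 (mact B f))
    (@dsum_id A B) (@dsum_comp A B).

Definition indecomposable (M : module k D) : Prop :=
  mod_nonzero M /\
  ~ (exists A B : module k D,
        mod_nonzero A /\ mod_nonzero B /\ mod_iso M (dsum A B)).
End Modules.

Section Pullback.
Variables (k : fieldType) (D E : category) (F : functor D E) (M : module k E).
Lemma pull_id x : mact M (fmap F (idm x)) = 1%:M.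
Proof. by rewrite fmap_id mact_id. Qed.
Lemma pull_comp x y z (g : Hom y z) (f : Hom x y) :
  mact M (fmap F (cmp g f)) = mact M (fmap F f) *m mact M (fmap F g).
Proof. by rewrite fmap_comp mact_comp. Qed.
Definition pullback : module k D :=
  @Module k D (fun x => mdim M (F x)) (fun x y f => mact M (fmap F f))
    pull_id pull_comp.
End Pullback.

Lemma sig_eqP (A : Type) (P : A -> Prop) (u v : sig P) :
  proj1_sig u = proj1_sig v -> u = v.
Proof.
case: u => a pa; case: v => b pb /= eab; subst b.
by rewrite (proof_irrelevance _ pa pb).
Qed.

(* An object is x_0 -u_1-> x_1 -> ... -u_n-> x_n, stored as             *)
(* sobj : 'I_n.+1 -> C and smor k : x_k -> x_(k+1) for k : 'I_n.        *)
Section Strings.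
Variable C : category.

Definition wid {n} (k : 'I_n) : 'I_n.+1 := widen_ord (leqnSn n) k.
Definition suc {n} (k : 'I_n) : 'I_n.+1 := lift ord0 k.

Record string (n : nat) := Str {
  sobj : 'I_n.+1 -> C;
  smor : forall k : 'I_n, Hom (sobj (wid k)) (sobj (suc k))
}.

Record ladder n (s t : string n) := Lad {
  lmap : forall j : 'I_n.+1, Hom (sobj s j) (sobj t j);
  lcomm : forall k : 'I_n,
      cmp (smor t k) (lmap (wid k)) = cmp (lmap (suc k)) (smor s k)
}.

Lemma ladder_eq n (s t : string n) (f g : ladder s t) :
  (forall j, lmap f j = lmap g j) -> f = g.
Proof.
case: f => f hf; case: g => g hg /= efg.
have e : f = g by apply: functional_extensionality_dep.
subst g; by rewrite (proof_irrelevance _ hf hg).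
Qed.

Lemma lad_id_comm n (s : string n) k :
  cmp (smor s k) (idm (sobj s (wid k))) = cmp (idm (sobj s (suc k))) (smor s k).
Proof. by rewrite comp1f compf1. Qed.

Definition lad_id n (s : string n) : ladder s s :=
  @Lad n s s (fun j => idm (sobj s j)) (@lad_id_comm n s).

Lemma lad_comp_comm n (s t u : string n) (g : ladder t u) (f : ladder s t) k :
  cmp (smor u k) (cmp (lmap g (wid k)) (lmap f (wid k))) =
  cmp (cmp (lmap g (suc k)) (lmap f (suc k))) (smor s k).
Proof.
by rewrite compA lcomm -compA lcomm compA.
Qed.

Definition lad_comp n (s t u : string n) (g : ladder t u) (f : ladder s t)
  : ladder s u :=
  @Lad n s u (fun j => cmp (lmap g j) (lmap f j)) (@lad_comp_comm n s t u g f).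

Lemma lad_comp1f n (s t : string n) (f : ladder s t) : lad_comp (lad_id t) f = f.
Proof. by apply: ladder_eq => j /=; rewrite comp1f. Qed.
Lemma lad_compf1 n (s t : string n) (f : ladder s t) : lad_comp f (lad_id s) = f.
Proof. by apply: ladder_eq => j /=; rewrite compf1. Qed.
Lemma lad_compA n (s t u v : string n) (h : ladder u v) (g : ladder t u)
  (f : ladder s t) : lad_comp h (lad_comp g f) = lad_comp (lad_comp h g) f.
Proof. by apply: ladder_eq => j /=; rewrite compA. Qed.

Definition Estr (n : nat) : category :=
  @Cat (string n) (@ladder n) (@lad_id n) (@lad_comp n)
    (@lad_comp1f n) (@lad_compf1 n) (@lad_compA n).

Definition castH m (X : 'I_m -> C) (a b a' b' : 'I_m) (ea : a = a') (eb : b = b')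
  (f : Hom (X a) (X b)) : Hom (X a') (X b') :=
  match ea in _ = a0 return Hom (X a0) (X b') with
  | erefl => match eb in _ = b0 return Hom (X a) (X b0) with
             | erefl => f end end.
Arguments castH {m} X {a b a' b'} ea eb f.

Lemma castH_nat m (X Y : 'I_m -> C) (fs : forall j, Hom (X j) (Y j))
  a b a' b' (ea : a = a') (eb : b = b') u v :
  cmp v (fs a) = cmp (fs b) u ->
  cmp (castH Y ea eb v) (fs a') = cmp (fs b') (castH X ea eb u).
Proof. by case: a' / ea; case: b' / eb. Qed.

Lemma castH_comp m (X : 'I_m -> C) a b c a' c' (ea : a = a') (ec : c = c')
  (g : Hom (X b) (X c)) (f : Hom (X a) (X b)) :
  castH X ea ec (cmp g f) = cmp (castH X (erefl b) ec g) (castH X ea (erefl b) f).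
Proof. by case: a' / ea; case: c' / ec. Qed.

Section Face.
Variables (n : nat) (i : 'I_n.+2).

Lemma faceA_s (k : 'I_n) : (k.+1 < i)%N -> wid (wid k) = lift i (wid k).
Proof. by move=> h; apply: val_inj; rewrite /= /bump leqNgt (ltn_trans (ltnSn k) h). Qed.
Lemma faceA_t (k : 'I_n) : (k.+1 < i)%N -> suc (wid k) = lift i (suc k).
Proof. by move=> h; apply: val_inj; rewrite /= /bump /= leqNgt h. Qed.
Lemma faceB_s (k : 'I_n) : (i < k.+1)%N -> wid (suc k) = lift i (wid k).
Proof. by move=> h; apply: val_inj; rewrite /= /bump /= -ltnS h. Qed.
Lemma faceB_t (k : 'I_n) : (i < k.+1)%N -> suc (suc k) = lift i (suc k).
Proof. by move=> h; apply: val_inj; rewrite /= /bump /= (ltnW h). Qed.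
Lemma faceC_s (k : 'I_n) : (k.+1 <= i)%N -> (i <= k.+1)%N -> wid (wid k) = lift i (wid k).
Proof. by move=> h1 h2; apply: val_inj; rewrite /= /bump leqNgt h1. Qed.
Lemma faceC_m (k : 'I_n) : suc (wid k) = wid (suc k) :> 'I_n.+2.
Proof. by apply: val_inj. Qed.
Lemma faceC_t (k : 'I_n) : (i <= k.+1)%N -> suc (suc k) = lift i (suc k).
Proof. by move=> h; apply: val_inj; rewrite /= /bump /= h. Qed.

(* the morphisms of d_i s : u_1..u_(i-1), u_(i+1) o u_i, u_(i+2)..; for
   i = 0 (resp. i = n+1) the first (resp. last) morphism is dropped *)
Definition face_mor (X : 'I_n.+2 -> C)
  (U : forall k : 'I_n.+1, Hom (X (wid k)) (X (suc k))) (k : 'I_n) :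
  Hom (X (lift i (wid k))) (X (lift i (suc k))).
Proof.
case: (ltnP k.+1 i) => h1.
  exact: (castH X (faceA_s h1) (faceA_t h1) (U (wid k))).
case: (ltnP i k.+1) => h2.
  exact: (castH X (faceB_s h2) (faceB_t h2) (U (suc k))).
exact: (castH X (faceC_s h2 h1) (faceC_t h1)
          (cmp (U (suc k)) (castH X (erefl _) (faceC_m k) (U (wid k))))).
Defined.

Definition face_str (s : string n.+1) : string n :=
  @Str n (fun j => sobj s (lift i j)) (face_mor (@smor _ s)).

Lemma face_lcomm (s t : string n.+1) (f : ladder s t) (k : 'I_n) :
  cmp (smor (face_str t) k) (lmap f (lift i (wid k))) =
  cmp (lmap f (lift i (suc k))) (smor (face_str s) k).
Proof.
rewrite /= /face_mor; case: (ltnP k.+1 i) => h1.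
  by apply: castH_nat; apply: lcomm.
case: (ltnP i k.+1) => h2.
  by apply: castH_nat; apply: lcomm.
apply: castH_nat.
rewrite -compA (castH_nat (erefl _) (faceC_m k) (lcomm f (wid k))) !compA.
by rewrite (lcomm f (suc k)).
Qed.

Definition face_lad (s t : string n.+1) (f : ladder s t) :
  ladder (face_str s) (face_str t) :=
  @Lad n (face_str s) (face_str t) (fun j => lmap f (lift i j)) (face_lcomm f).

Lemma face_id (s : Estr n.+1) : face_lad (idm s) = @idm (Estr n) (face_str s).
Proof. by apply: ladder_eq. Qed.
Lemma face_comp (s t u : Estr n.+1) (g : Hom t u) (f : Hom s t) :
  face_lad (cmp g f) = @cmp (Estr n) _ _ _ (face_lad g) (face_lad f).
Proof. by apply: ladder_eq. Qed.

Definition face : functor (Estr n.+1) (Estr n) :=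
  @Functor (Estr n.+1) (Estr n) face_str face_lad face_id face_comp.
End Face.
End Strings.

(* The category G~^C_1: objects are the morphisms u : a -> b of C;      *)
(* morphisms [u] -> [v] (v : c -> d) are the identities and the pairs   *)
(* (w o u, v o w) for w : b -> c; composition is componentwise.         *)
Section G1.
Variable C : category.

Record arrow := Arr { asrc : C; atgt : C; amor : Hom asrc atgt }.

Definition id_pair (U V : arrow) (e : U = V) :
  Hom (asrc U) (asrc V) * Hom (atgt U) (atgt V) :=
  eq_rect U (fun W => (Hom (asrc U) (asrc W) * Hom (atgt U) (atgt W))%type)
    (idm (asrc U), idm (atgt U)) V e.

Definition G1rel (U V : arrow)
  (pq : Hom (asrc U) (asrc V) * Hom (atgt U) (atgt V)) : Prop :=
  (exists e : U = V, pq = id_pair e) \/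
  (exists w : Hom (atgt U) (asrc V), pq = (cmp w (amor U), cmp (amor V) w)).

Definition G1hom (U V : arrow) :=
  { pq : Hom (asrc U) (asrc V) * Hom (atgt U) (atgt V) | G1rel pq }.

Lemma G1rel_id U : G1rel (idm (asrc U), idm (atgt U)).
Proof. by left; exists (erefl U). Qed.

Definition G1id (U : arrow) : G1hom U U := exist _ _ (G1rel_id U).

Lemma G1rel_comp U V W (g : G1hom V W) (f : G1hom U V) :
  G1rel (cmp (proj1_sig g).1 (proj1_sig f).1, cmp (proj1_sig g).2 (proj1_sig f).2).
Proof.
case: g => [[p' q'] /= hg]; case: f => [[p q] /= hf].
case: hf => [[e epq] | [w [-> ->]]].
  subst V; move: epq => /= [-> ->]; rewrite !compf1; exact: hg.
case: hg => [[e epq] | [w' [-> ->]]].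
  subst W; move: epq => /= [-> ->]; rewrite !comp1f; right; by exists w.
right; exists (cmp w' (cmp (amor V) w)).
by rewrite !compA.
Qed.

Definition G1comp U V W (g : G1hom V W) (f : G1hom U V) : G1hom U W :=
  exist _ _ (G1rel_comp g f).

Lemma G1comp1f U V (f : G1hom U V) : G1comp (G1id V) f = f.
Proof. by apply: sig_eqP; case: f => [[p q] ?] /=; rewrite !comp1f. Qed.
Lemma G1compf1 U V (f : G1hom U V) : G1comp f (G1id U) = f.
Proof. by apply: sig_eqP; case: f => [[p q] ?] /=; rewrite !compf1. Qed.
Lemma G1compA U V W X (h : G1hom W X) (g : G1hom V W) (f : G1hom U V) :
  G1comp h (G1comp g f) = G1comp (G1comp h g) f.
Proof. by apply: sig_eqP => /=; rewrite !compA. Qed.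

Definition G1 : category :=
  @Cat arrow G1hom G1id G1comp G1comp1f G1compf1 G1compA.

Lemma G1d0_id (U : G1) : (proj1_sig (idm U)).2 = idm (atgt U).
Proof. by []. Qed.
Lemma G1d0_comp (U V W : G1) (g : Hom V W) (f : Hom U V) :
  (proj1_sig (cmp g f)).2 = cmp (proj1_sig g).2 (proj1_sig f).2.
Proof. by []. Qed.
Definition G1d0 : functor G1 C :=
  @Functor G1 C atgt (fun U V (f : Hom U V) => (proj1_sig f).2) G1d0_id G1d0_comp.

Lemma G1d1_id (U : G1) : (proj1_sig (idm U)).1 = idm (asrc U).
Proof. by []. Qed.
Lemma G1d1_comp (U V W : G1) (g : Hom V W) (f : Hom U V) :
  (proj1_sig (cmp g f)).1 = cmp (proj1_sig g).1 (proj1_sig f).1.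
Proof. by []. Qed.
Definition G1d1 : functor G1 C :=
  @Functor G1 C asrc (fun U V (f : Hom U V) => (proj1_sig f).1) G1d1_id G1d1_comp.
End G1.

(* Main.v *)
Require Import Defs.
From mathcomp Require Import all_boot all_algebra.
From mathcomp Require Import zify.
Unset Strict Implicit. Unset Printing Implicit Defensive.
Import GRing.Theory.
Notation Hom := Defs.Hom.
Notation cmp := Defs.cmp.
Notation idm := Defs.idm.
Notation compA := Defs.compA.
Notation comp1f := Defs.comp1f.
Notation compf1 := Defs.compf1.

Set Implicit Arguments.
Section A_sec.
Local Open Scope ring_scope.

Lemma rinv_le (k : fieldType) p q (A : 'M[k]_(p, q)) (B : 'M[k]_(q, p)) :
  A *m B = 1%:M -> (p <= q)%N.
Proof.
move=> h; have := mxrankM_maxl A B; rewrite h mxrank1 => h1.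
exact: leq_trans h1 (rank_leq_col A).
Qed.

Lemma blk_r (k : fieldType) p1 p2 q1 q2 (X : 'M[k]_(p1, q1)) (Y : 'M[k]_(p2, q2))
  (Q : 'M[k]_(q1 + q2, p1 + p2)) :
  block_mx X 0 0 Y *m Q = 1%:M -> (p1 <= q1)%N /\ (p2 <= q2)%N.
Proof.
rewrite -(submxK Q) mulmx_block (scalar_mx_block p1 p2) => /eq_block_mx.
rewrite !mul0mx !addr0 !add0r => -[h1 _ _ h4]; split.
  exact: rinv_le h1.
exact: rinv_le h4.
Qed.

Lemma blk_l (k : fieldType) p1 p2 q1 q2 (X : 'M[k]_(p1, q1)) (Y : 'M[k]_(p2, q2))
  (Q : 'M[k]_(q1 + q2, p1 + p2)) :
  Q *m block_mx X 0 0 Y = 1%:M -> (q1 <= p1)%N /\ (q2 <= p2)%N.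
Proof.
rewrite -(submxK Q) mulmx_block (scalar_mx_block q1 q2) => /eq_block_mx.
rewrite !mulmx0 !addr0 !add0r => -[h1 _ _ h4]; split.
  exact: rinv_le h1.
exact: rinv_le h4.
Qed.

Section Abstract.
Variables (k : fieldType) (D E : category) (F : functor D E) (S : functor E D)
  (M : module k E).
Variables (eta : forall e : E, Hom e (F (S e))) (etai : forall e : E, Hom (F (S e)) e).
Hypotheses (H1 : forall e : E, cmp (etai e) (eta e) = idm e)
  (H2 : forall e : E, cmp (eta e) (etai e) = idm (F (S e)))
  (Hn : forall (e e' : E) (g : Hom e e'), cmp (eta e') g = cmp (fmap F (fmap S g)) (eta e))
  (Hc : forall d : D,
     (exists c : Hom d (S (F d)), exists ci : Hom (F (S (F d))) (F d),
         cmp ci (fmap F c) = idm (F d)) \/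
     (exists c : Hom (S (F d)) d, exists ci : Hom (F d) (F (S (F d))),
         cmp (fmap F c) ci = idm (F d))).

Lemma dims_le (A B : module k D)
  (phi : forall x, 'M[k]_(mdim (pullback F M) x, mdim (dsum A B) x))
  (psi : forall x, 'M[k]_(mdim (dsum A B) x, mdim (pullback F M) x))
  (hpp : forall x, phi x *m psi x = 1%:M /\ psi x *m phi x = 1%:M)
  (hnat : forall x y (f : Hom x y), mact (pullback F M) f *m phi y =
                                    phi x *m mact (dsum A B) f) d :
  (mdim A d <= mdim A (S (F d)))%N /\ (mdim B d <= mdim B (S (F d)))%N.
Proof.
case: (Hc d) => -[c [ci hci]].
  have hn := hnat _ _ c; simpl in hn.
  apply: (@blk_r _ _ _ _ _ (mact A c) (mact B c)
            (psi (S (F d)) *m mact M ci *m phi d)).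
  have -> : block_mx (mact A c) 0 0 (mact B c) = psi d *m mact M (fmap F c) *m phi (S (F d)).
    by rewrite -mulmxA hn mulmxA (proj2 (hpp d)) mul1mx.
  rewrite !mulmxA -[_ *m phi (S (F d)) *m _]mulmxA (proj1 (hpp _)) mulmx1.
  rewrite -(proj2 (hpp d)); congr (_ *m _); rewrite -mulmxA; have hh := mact_comp M ci (fmap F c); rewrite -hh hci mact_id mulmx1 //.
have hn' := hnat _ _ c; simpl in hn'.
apply: (@blk_l _ _ _ _ _ (mact A c) (mact B c)
          (psi d *m mact M ci *m phi (S (F d)))).
have -> : block_mx (mact A c) 0 0 (mact B c) = psi (S (F d)) *m mact M (fmap F c) *m phi d.
  by rewrite -mulmxA hn' mulmxA (proj2 (hpp _)) mul1mx.
rewrite !mulmxA -[_ *m phi (S (F d)) *m _]mulmxA (proj1 (hpp _)) mulmx1.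
rewrite -(proj2 (hpp d)); congr (_ *m _); rewrite -[psi d *m _ *m _]mulmxA; have hh := mact_comp M (fmap F c) ci; rewrite -hh hci mact_id mulmx1 //.
Qed.

Lemma pull_indec : indecomposable M -> indecomposable (pullback F M).
Proof.
move=> [[e he] ndec]; split.
  exists (S e) => /=.
  apply: leq_trans he _; apply: (@rinv_le k _ _ (mact M (eta e)) (mact M (etai e))).
  by rewrite -mact_comp H1 mact_id.
move=> [A [B [[da hA] [[db hB] [phi [psi [hpp hnat]]]]]]].
apply: ndec; exists (pullback S A), (pullback S B).
have [hA1 _] := dims_le hpp hnat da.
have [_ hB1] := dims_le hpp hnat db.
split; first by exists (F da); exact: leq_trans hA hA1.
split; first by exists (F db); exact: leq_trans hB hB1.
exists (fun e => mact M (eta e) *m phi (S e)),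
       (fun e => psi (S e) *m mact M (etai e)); split.
  move=> x; split.
    rewrite -mulmxA [phi _ *m _]mulmxA (proj1 (hpp _)) mul1mx -mact_comp H1.
    by rewrite mact_id.
  rewrite -mulmxA [mact M (etai x) *m _]mulmxA -mact_comp H2 mact_id mul1mx.
  exact: (proj2 (hpp _)).
move=> x y g /=.
rewrite mulmxA -mact_comp Hn mact_comp -mulmxA.
have := hnat _ _ (fmap S g); rewrite /= => ->.
by rewrite mulmxA.
Qed.
End Abstract.

End A_sec.

Section G1part.
Variable C : category.

Definition Sobj (c : C) : G1 C := Arr (idm c).

Definition Smap (c c' : C) (f : Hom c c') : @Hom (G1 C) (Sobj c) (Sobj c') :=
  exist _ (cmp f (idm c), cmp (idm c') f) (or_intror (ex_intro _ f erefl)).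

Lemma Smap_id c : Smap (idm c) = idm (Sobj c).
Proof. by apply: sig_eqP => /=; rewrite comp1f. Qed.

Lemma Smap_comp c1 c2 c3 (g : Hom c2 c3) (f : Hom c1 c2) :
  Smap (cmp g f) = cmp (Smap g) (Smap f).
Proof. by apply: sig_eqP => /=; rewrite !compf1 !comp1f. Qed.

Definition SG : functor C (G1 C) := Functor Smap_id Smap_comp.

Lemma G1_part (k : fieldType) (M : module k C) :
  indecomposable M ->
  indecomposable (pullback (G1d0 C) M) /\ indecomposable (pullback (G1d1 C) M).
Proof.
move=> hM; split.
  apply: (@pull_indec k _ _ (G1d0 C) SG M (fun e => idm e) (fun e => idm e)) => //.
  - by move=> e; rewrite comp1f.
  - by move=> e; rewrite comp1f.
  - by move=> e e' g /=; rewrite ?comp1f ?compf1 ?comp1f.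
  move=> [a b u]; left.
  exists (exist (@G1rel C (Arr u) (Sobj b)) (cmp (idm b) u, cmp (idm b) (idm b))
            (or_intror (ex_intro _ (idm b) erefl))).
  by exists (idm b); rewrite /= !comp1f.
apply: (@pull_indec k _ _ (G1d1 C) SG M (fun e => idm e) (fun e => idm e)) => //.
- by move=> e; rewrite comp1f.
- by move=> e; rewrite comp1f.
- by move=> e e' g /=; rewrite ?comp1f ?compf1 ?comp1f.
move=> [a b u]; right.
exists (exist (@G1rel C (Sobj a) (Arr u)) (cmp (idm a) (idm a), cmp u (idm a))
          (or_intror (ex_intro _ (idm a) erefl))).
by exists (idm a); rewrite /= !comp1f.
Qed.
End G1part.

Unset Implicit Arguments.

Section Cst.
Variable C : category.

Definition cst {I : Type} (Y : I -> C) {a b : I} (e : a = b) : Hom (Y a) (Y b) :=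
  match e in _ = b0 return Hom (Y a) (Y b0) with erefl => idm (Y a) end.

Lemma cst_id (I : eqType) (Y : I -> C) (a : I) (e : a = a) : cst Y e = idm (Y a).
Proof. by rewrite (eq_irrelevance e erefl). Qed.

Lemma cst_irr (I : eqType) (Y : I -> C) (a b : I) (e e' : a = b) : cst Y e = cst Y e'.
Proof. by rewrite (eq_irrelevance e e'). Qed.

Lemma cst_trans (I : Type) (Y : I -> C) (a b c : I) (e1 : a = b) (e2 : b = c) :
  cmp (cst Y e2) (cst Y e1) = cst Y (etrans e1 e2).
Proof. by case: c / e2; case: b / e1; rewrite /= comp1f. Qed.

Lemma cst_nat (I : Type) (Y Z : I -> C) (f : forall j, Hom (Y j) (Z j)) (a b : I)
  (e : a = b) : cmp (cst Z e) (f a) = cmp (f b) (cst Y e).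
Proof. by case: b / e; rewrite /= comp1f compf1. Qed.

Lemma castH_cst m (Y : 'I_m -> C) (a b a' b' : 'I_m) (ea : a = a') (eb : b = b')
  (f : Hom (Y a) (Y b)) : @castH _ _ Y _ _ _ _ ea eb f = cmp (cst Y eb) (cmp f (cst Y (esym ea))).
Proof. by case: a' / ea; case: b' / eb; rewrite /= comp1f compf1. Qed.

Lemma cst_comp (I J : Type) (Y : J -> C) (g : I -> J) (a b : I) (e : a = b) :
  cst (fun j => Y (g j)) e = cst Y (congr1 g e).
Proof. by case: b / e. Qed.
End Cst.
Arguments cst {C I} Y {a b} e.
Arguments cst_id {C I Y a} e.
Arguments cst_irr {C I Y a b} e e'.
Arguments cst_trans {C I Y a b c} e1 e2.
Arguments cst_nat {C I Y Z} f {a b} e.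
Arguments castH_cst {C m Y a b a' b'} ea eb f.
Arguments cst_comp {C I J Y g a b} e.

Lemma ord_ind2 m (a : 'I_m.+1) (Q : 'I_m.+1 -> Prop) :
  Q a -> (forall k : 'I_m, (a <= wid k)%N -> Q (wid k) -> Q (suc k)) ->
  forall b : 'I_m.+1, (a <= b)%N -> Q b.
Proof.
move=> Qa IH b; have [bn ebn] : exists bn, val b = bn by exists (val b).
elim: bn b ebn => [|bn IHn] b ebn hab.
  have -> : b = a by apply: val_inj; apply/eqP; rewrite eqn_leq hab ebn.
  exact: Qa.
have [eab|neab] := eqVneq a b; first by rewrite -eab.
have hk : (bn < m)%N by have := ltn_ord b; rewrite ebn ltnS.
have -> : b = suc (Ordinal hk) by apply: val_inj; rewrite /= /bump /= ebn.
have hw : (a <= wid (Ordinal hk))%N.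
  by rewrite /= -ltnS -ebn ltn_neqAle hab andbT; apply: contra neab => /eqP e; apply/eqP/val_inj.
apply: (IH _ hw); by apply: (IHn _ _ hw).
Qed.

Section Path.
Variables (C : category) (m : nat) (X : 'I_m.+1 -> C)
  (U : forall k : 'I_m, Hom (X (wid k)) (X (suc k))).

Lemma Pg0_eq {a : 'I_m.+1} (hd : (a + 0 < m.+1)%N) : a = Ordinal hd.
Proof. by apply: val_inj; rewrite /= addn0. Qed.
Lemma PgS_hd {a : 'I_m.+1} {d} : (a + d.+1 < m.+1)%N -> (a + d < m.+1)%N.
Proof. by rewrite addnS => /ltnW. Qed.
Lemma PgS_k {a : 'I_m.+1} {d} : (a + d.+1 < m.+1)%N -> (a + d < m)%N.
Proof. by rewrite addnS. Qed.
Lemma PgS_eq1 {a : 'I_m.+1} {d} (hd : (a + d.+1 < m.+1)%N) :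
  Ordinal (PgS_hd hd) = wid (Ordinal (PgS_k hd)).
Proof. by apply: val_inj. Qed.
Lemma PgS_eq2 {a : 'I_m.+1} {d} (hd : (a + d.+1 < m.+1)%N) :
  suc (Ordinal (PgS_k hd)) = Ordinal hd.
Proof. by apply: val_inj; rewrite /= /bump /= addnS. Qed.

Fixpoint Pg (a : 'I_m.+1) (d : nat) {struct d} :
  forall hd : (a + d < m.+1)%N, Hom (X a) (X (Ordinal hd)) :=
  match d as d0 return forall hd : (a + d0 < m.+1)%N, Hom (X a) (X (Ordinal hd)) with
  | 0 => fun hd => cst X (Pg0_eq hd)
  | d'.+1 => fun hd =>
      cmp (cst X (PgS_eq2 hd))
        (cmp (U (Ordinal (PgS_k hd))) (cmp (cst X (PgS_eq1 hd)) (Pg a d' (PgS_hd hd))))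
  end.

Lemma P_hd {a b : 'I_m.+1} : (a <= b)%N -> (a + (b - a) < m.+1)%N.
Proof. by move=> h; rewrite subnKC. Qed.
Lemma P_eq {a b : 'I_m.+1} (h : (a <= b)%N) : Ordinal (P_hd h) = b.
Proof. by apply: val_inj; rewrite /= subnKC. Qed.

Definition P (a b : 'I_m.+1) (h : (a <= b)%N) : Hom (X a) (X b) :=
  cmp (cst X (P_eq h)) (Pg a (b - a) (P_hd h)).

Lemma P_irr (a b : 'I_m.+1) h h' : P a b h = P a b h'.
Proof. by rewrite (bool_irrelevance h h'). Qed.

Lemma P_Pg (a b : 'I_m.+1) (hab : (a <= b)%N) (d : nat) (hd : (a + d < m.+1)%N) (eo : Ordinal hd = b) :
  d = (b - a)%N -> P a b hab = cmp (cst X eo) (Pg a d hd).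
Proof.
move=> ed; subst d; move: eo; case: hd / (bool_irrelevance (P_hd hab) hd) => eo.
by rewrite /P (cst_irr eo (P_eq hab)).
Qed.

Lemma P_refl (a : 'I_m.+1) h : P a a h = idm (X a).
Proof.
have hd : (a + 0 < m.+1)%N by rewrite addn0.
rewrite (@P_Pg a a h 0 hd (esym (Pg0_eq hd))); last by rewrite subnn.
by rewrite /= cst_trans cst_id.
Qed.

Lemma U_cast (k1 k2 : 'I_m) (e : k1 = k2) (e1 : wid k2 = wid k1) (e2 : suc k1 = suc k2) :
  cmp (cst X e2) (cmp (U k1) (cst X e1)) = U k2.
Proof. by case: k2 / e e1 e2 => e1 e2; rewrite !cst_id comp1f compf1. Qed.

Lemma P_last (a : 'I_m.+1) (k : 'I_m) (h : (a <= wid k)%N) (h' : (a <= suc k)%N) :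
  P a (suc k) h' = cmp (U k) (P a (wid k) h).
Proof.
have hd : (a + (k - a).+1 < m.+1)%N.
  by rewrite addnS subnKC //; move: (ltn_ord k); rewrite ltnS.
have eo : Ordinal hd = suc k by apply: val_inj; rewrite /= addnS subnKC.
rewrite (@P_Pg a (suc k) h' _ hd eo); last first.
  by rewrite /= /bump /= add1n subSn.
have eo2 : Ordinal (PgS_hd hd) = wid k by apply: val_inj; rewrite /= subnKC.
rewrite (@P_Pg a (wid k) h _ (PgS_hd hd) eo2) //.
have ek : Ordinal (PgS_k hd) = k by apply: val_inj; rewrite /= subnKC.
have e1 : wid k = wid (Ordinal (PgS_k hd)) by rewrite ek.
have e2 : suc (Ordinal (PgS_k hd)) = suc k by rewrite ek.
rewrite -(U_cast _ _ ek e1 e2) /=.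
rewrite !compA cst_trans -!compA; congr (cmp _ _).
  exact: cst_irr.
congr (cmp _ _); rewrite !compA cst_trans; congr (cmp _ _).
exact: cst_irr.
Qed.

Lemma P_step (k : 'I_m) h : P (wid k) (suc k) h = U k.
Proof. by rewrite (P_last _ _ (leqnn _)) P_refl compf1. Qed.

Lemma P_comp (a b c : 'I_m.+1) (hab : (a <= b)%N) (hbc : (b <= c)%N) hac :
  cmp (P b c hbc) (P a b hab) = P a c hac.
Proof.
move: hbc hac.
have key : forall c0 : 'I_m.+1, (b <= c0)%N -> forall (hbc : (b <= c0)%N) (hac : (a <= c0)%N),
  cmp (P b c0 hbc) (P a b hab) = P a c0 hac; last by move=> hbc; apply: key.
apply: ord_ind2 => [hbc hac|kk hk IH hbc hac].
  by rewrite P_refl comp1f (P_irr _ _ hab hac).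
by rewrite (P_last _ _ hk) (P_last _ _ (leq_trans hab hk)) -compA (IH _ (leq_trans hab hk)).
Qed.

Lemma P_cst (a b a' b' : 'I_m.+1) (ea : a' = a) (eb : b = b') h h' :
  cmp (cst X eb) (cmp (P a b h) (cst X ea)) = P a' b' h'.
Proof.
case: b' / eb h'; move: h; case: a / ea => h h' /=.
by rewrite comp1f compf1 (P_irr _ _ h h').
Qed.
End Path.
Arguments P {C m} X U a b h.
Arguments P_irr {C m X U a b} h h'.
Arguments P_refl {C m X U a} h.
Arguments P_last {C m X U a k} h h'.
Arguments P_step {C m X U k} h.
Arguments P_comp {C m X U a b c} hab hbc hac.
Arguments P_cst {C m X U a b a' b'} ea eb h h'.

Lemma P_nat (C : category) m (X Y : 'I_m.+1 -> C)
  (U : forall k : 'I_m, Hom (X (wid k)) (X (suc k)))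
  (V : forall k : 'I_m, Hom (Y (wid k)) (Y (suc k)))
  (f : forall j, Hom (X j) (Y j))
  (hf : forall k, cmp (V k) (f (wid k)) = cmp (f (suc k)) (U k)) (a b : 'I_m.+1) h :
  cmp (P Y V a b h) (f a) = cmp (f b) (P X U a b h).
Proof.
move: h.
have key : forall b0 : 'I_m.+1, (a <= b0)%N -> forall h : (a <= b0)%N,
  cmp (P Y V a b0 h) (f a) = cmp (f b0) (P X U a b0 h); last by move=> h; apply: key.
apply: ord_ind2 => [h|kk hk IH h].
  by rewrite !P_refl comp1f compf1.
by rewrite (P_last hk) (P_last hk) -compA IH compA hf -compA.
Qed.

Lemma P_reindex (C : category) m p (X : 'I_m.+1 -> C)
  (U : forall k : 'I_m, Hom (X (wid k)) (X (suc k)))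
  (g : 'I_p.+1 -> 'I_m.+1) (hg : forall a b : 'I_p.+1, (a <= b)%N -> (g a <= g b)%N)
  (V : forall k : 'I_p, Hom (X (g (wid k))) (X (g (suc k))))
  (hV : forall k h, V k = P X U (g (wid k)) (g (suc k)) h)
  (a b : 'I_p.+1) h h' :
  P (fun j => X (g j)) V a b h = P X U (g a) (g b) h'.
Proof.
move: h h'.
have key : forall b0 : 'I_p.+1, (a <= b0)%N -> forall h h',
  P (fun j => X (g j)) V a b0 h = P X U (g a) (g b0) h'; last by move=> h; apply: key.
apply: ord_ind2 => [h h'|kk hk IH h h'].
  by rewrite !P_refl.
have h1 : (g (wid kk) <= g (suc kk))%N by apply: hg; rewrite /= /bump /= add1n leqnSn.
have h2 : (g a <= g (wid kk))%N by apply: hg.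
by rewrite (P_last hk) (IH _ h2) (hV _ h1) P_comp.
Qed.

Arguments P_nat {C m X Y U V f} hf a b h.
Arguments P_reindex {C m p X U g} hg {V} hV a b h h'.


Lemma leq_ws m (k : 'I_m) : (wid k <= suc k)%N.
Proof. by rewrite /= /bump /= add1n leqnSn. Qed.
Arguments leq_ws {m} k.

Lemma U_P (C : category) m (X : 'I_m.+1 -> C) (U : forall k : 'I_m, Hom (X (wid k)) (X (suc k)))
  (k : 'I_m) h : U k = P X U (wid k) (suc k) h.
Proof. by rewrite P_step. Qed.
Arguments U_P {C m X} U k h.

Lemma P_cstL (C : category) m (X : 'I_m.+1 -> C) (U : forall k : 'I_m, Hom (X (wid k)) (X (suc k)))
  (a b b' : 'I_m.+1) (eb : b = b') h h' :
  cmp (cst X eb) (P X U a b h) = P X U a b' h'.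
Proof. by rewrite -(P_cst (erefl a) eb h h') /= compf1. Qed.
Arguments P_cstL {C m X U a b b'} eb h h'.

Lemma P_inv (C : category) m (X : 'I_m.+1 -> C) (U : forall k : 'I_m, Hom (X (wid k)) (X (suc k)))
  (a b : 'I_m.+1) h h' : cmp (P X U b a h) (P X U a b h') = idm (X a).
Proof. by rewrite (P_comp h' h (leqnn a)) P_refl. Qed.
Arguments P_inv {C m X U a b} h h'.

Lemma lift_mono n (i : 'I_n.+1) (a b : 'I_n) : (a <= b)%N -> (lift i a <= lift i b)%N.
Proof. by rewrite /= leq_bump2. Qed.

Lemma FM (C : category) n (i : 'I_n.+2) (X : 'I_n.+2 -> C)
  (U : forall k : 'I_n.+1, Hom (X (wid k)) (X (suc k))) (k : 'I_n) h :
  face_mor i U k = P X U (lift i (wid k)) (lift i (suc k)) h.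
Proof.
rewrite /face_mor; case: (ltnP k.+1 i) => h1.
  by rewrite castH_cst (U_P _ _ (leq_ws _)) P_cst.
case: (ltnP i k.+1) => h2.
  by rewrite castH_cst (U_P _ _ (leq_ws _)) P_cst.
rewrite castH_cst castH_cst /= compf1.
have hh2 : (wid (wid k) <= wid (suc k))%N by rewrite /= /bump /=; lia.
rewrite (U_P U (wid k) (leq_ws _)) (P_cstL (faceC_m k) _ hh2).
rewrite (U_P U (suc k) (leq_ws _)).
have hh : (wid (wid k) <= suc (suc k))%N by rewrite /= /bump /=; lia.
by rewrite (P_comp _ _ hh) P_cst.
Qed.

Lemma lad_inv_comm (C : category) n (s t : string C n) (f : ladder s t)
  (g : forall j, Hom (sobj t j) (sobj s j))
  (hg1 : forall j, cmp (g j) (lmap f j) = idm _)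
  (hg2 : forall j, cmp (lmap f j) (g j) = idm _) (k : 'I_n) :
  cmp (smor s k) (g (wid k)) = cmp (g (suc k)) (smor t k).
Proof.
rewrite -[cmp (smor s k) _]comp1f -(hg1 (suc k)) -!compA; congr (cmp _ _).
rewrite compA -lcomm -compA hg2 compf1 //.
Qed.

Arguments lad_inv_comm {C n s t f g} hg1 hg2 k.

Definition lad_inv (C : category) n (s t : string C n) (f : ladder s t)
  (g : forall j, Hom (sobj t j) (sobj s j))
  (hg1 : forall j, cmp (g j) (lmap f j) = idm _)
  (hg2 : forall j, cmp (lmap f j) (g j) = idm _) : ladder t s :=
  @Lad C n t s g (lad_inv_comm hg1 hg2).
Arguments lad_inv {C n s t} f g hg1 hg2.
Arguments lift_mono {n} i {a b} _.
Arguments FM {C n i X U k} h.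


Section FaceSec.
Variables (C : category) (n : nat) (i : 'I_n.+2).

Definition hh (x : 'I_n.+2) : 'I_n.+1 :=
  inord (if (x <= i)%N then minn x n else x.-1).

Lemma hh_val x : (hh x : nat) = if (x <= i)%N then minn x n else x.-1.
Proof.
rewrite inordK //; case: ifP => _; first by rewrite ltnS geq_minr.
by have := ltn_ord x; lia.
Qed.

Lemma hh_lift (j : 'I_n.+1) : hh (lift i j) = j.
Proof.
apply: ord_inj; rewrite hh_val /= /bump.
have := ltn_ord j; have := ltn_ord i.
case: (leqP i j) => hij /=; rewrite ?add0n ?add1n.
  by case: ifP => h; lia.
by case: ifP => h; lia.
Qed.

Lemma hh_mono (a b : 'I_n.+2) : (a <= b)%N -> (hh a <= hh b)%N.
Proof.
rewrite !hh_val; have := ltn_ord a; have := ltn_ord b.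
by case: ifP => h1; case: ifP => h2; lia.
Qed.

Lemma hh_lo (x : 'I_n.+2) : (i < n.+1)%N -> (x <= lift i (hh x))%N.
Proof.
move=> hi; rewrite /= /bump hh_val; have := ltn_ord x.
by case: ifP => h1; case: leqP => h2 /=; lia.
Qed.

Lemma hh_hi (x : 'I_n.+2) : (n.+1 <= i)%N -> (lift i (hh x) <= x)%N.
Proof.
move=> hi; rewrite /= /bump hh_val; have := ltn_ord x; have := ltn_ord i.
by case: ifP => h1; case: leqP => h2 /=; lia.
Qed.

Lemma hh_ws (k : 'I_n.+1) : (hh (wid k) <= hh (suc k))%N.
Proof. exact: hh_mono (leq_ws k). Qed.

Definition Sstr (t : string C n) : string C n.+1 :=
  @Str C n.+1 (fun x => sobj t (hh x))
    (fun k => P (sobj t) (@smor _ _ t) (hh (wid k)) (hh (suc k)) (hh_ws k)).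

Definition Slad (s t : string C n) (f : ladder s t) : ladder (Sstr s) (Sstr t) :=
  @Lad C n.+1 (Sstr s) (Sstr t) (fun x => lmap f (hh x))
    (fun k => P_nat (lcomm f) _ _ _).

Arguments Slad {s t} f.

Lemma Slad_id (s : Estr C n) : Slad (idm s) = @idm (Estr C n.+1) (Sstr s).
Proof. by apply: ladder_eq. Qed.
Lemma Slad_comp (s t u : Estr C n) (g : Hom t u) (f : Hom s t) :
  Slad (cmp g f) = @cmp (Estr C n.+1) _ _ _ (Slad g) (Slad f).
Proof. by apply: ladder_eq. Qed.

Definition Sfun : functor (Estr C n) (Estr C n.+1) :=
  @Functor (Estr C n) (Estr C n.+1) Sstr (@Slad) Slad_id Slad_comp.

Lemma hl1 (j : 'I_n.+1) : (j <= hh (lift i j))%N.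
Proof. by rewrite hh_lift. Qed.
Lemma hl2 (j : 'I_n.+1) : (hh (lift i j) <= j)%N.
Proof. by rewrite hh_lift. Qed.

Lemma smor_FS (t : string C n) (k : 'I_n) h :
  smor (face_str i (Sstr t)) k = P (sobj t) (@smor _ _ t) (hh (lift i (wid k))) (hh (lift i (suc k))) h.
Proof.
rewrite /= (FM (lift_mono i (leq_ws k))).
apply: (@P_reindex C n n.+1 (sobj t) (@smor _ _ t) hh hh_mono (@smor _ _ (Sstr t))).
by move=> kk h'; apply: P_irr.
Qed.

Lemma eta_comm (t : string C n) (k : 'I_n) :
  cmp (smor (face_str i (Sstr t)) k) (P (sobj t) (@smor _ _ t) (wid k) _ (hl1 (wid k))) =
  cmp (P (sobj t) (@smor _ _ t) (suc k) _ (hl1 (suc k))) (smor t k).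
Proof.
have h0 : (hh (lift i (wid k)) <= hh (lift i (suc k)))%N.
  exact: hh_mono (lift_mono i (leq_ws k)).
rewrite (smor_FS t k h0) (U_P _ k (leq_ws k)).
have h3 : (wid k <= hh (lift i (suc k)))%N by rewrite hh_lift (leq_ws k).
by rewrite (P_comp _ _ h3) (P_comp _ _ h3).
Qed.

Definition eta (t : string C n) : ladder t (face_str i (Sstr t)) :=
  @Lad C n t (face_str i (Sstr t))
    (fun j => P (sobj t) (@smor _ _ t) j (hh (lift i j)) (hl1 j)) (eta_comm t).

Definition etai (t : string C n) : ladder (face_str i (Sstr t)) t :=
  lad_inv (eta t) (fun j => P (sobj t) (@smor _ _ t) (hh (lift i j)) j (hl2 j))
    (fun j => @P_inv C n (sobj t) (@smor _ _ t) _ _ _ _)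
    (fun j => @P_inv C n (sobj t) (@smor _ _ t) _ _ _ _).

Lemma smor_SF (s : string C n.+1) (k : 'I_n.+1) h :
  smor (Sstr (face_str i s)) k =
  P (sobj s) (@smor _ _ s) (lift i (hh (wid k))) (lift i (hh (suc k))) h.
Proof.
apply: (@P_reindex C n.+1 n (sobj s) (@smor _ _ s) (lift i) (fun a b => @lift_mono _ i a b)
          (@smor _ _ (face_str i s))).
by move=> kk h'; rewrite /= (FM h').
Qed.

Lemma hLO (hi : (i < n.+1)%N) (s : string C n.+1) (k : 'I_n.+1) :
  cmp (smor (Sstr (face_str i s)) k) (P (sobj s) (@smor _ _ s) (wid k) _ (hh_lo (wid k) hi)) =
  cmp (P (sobj s) (@smor _ _ s) (suc k) _ (hh_lo (suc k) hi)) (smor s k).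
Proof.
have h0 : (lift i (hh (wid k)) <= lift i (hh (suc k)))%N.
  exact: lift_mono (hh_ws k).
rewrite (smor_SF s k h0) (U_P _ k (leq_ws k)).
have h3 : (wid k <= lift i (hh (suc k)))%N.
  exact: leq_trans (leq_ws k) (hh_lo (suc k) hi).
by rewrite (P_comp _ _ h3) (P_comp _ _ h3).
Qed.

Lemma hHI (hi : (n.+1 <= i)%N) (s : string C n.+1) (k : 'I_n.+1) :
  cmp (smor s k) (P (sobj s) (@smor _ _ s) _ (wid k) (hh_hi (wid k) hi)) =
  cmp (P (sobj s) (@smor _ _ s) _ (suc k) (hh_hi (suc k) hi)) (smor (Sstr (face_str i s)) k).
Proof.
have h0 : (lift i (hh (wid k)) <= lift i (hh (suc k)))%N.
  exact: lift_mono (hh_ws k).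
rewrite (smor_SF s k h0) (U_P _ k (leq_ws k)).
have h3 : (lift i (hh (wid k)) <= suc k)%N.
  exact: leq_trans (hh_hi (wid k) hi) (leq_ws k).
by rewrite (P_comp _ _ h3) (P_comp _ _ h3).
Qed.

Lemma hll1 (j : 'I_n.+1) : (lift i (hh (lift i j)) <= lift i j)%N.
Proof. by rewrite hh_lift. Qed.
Lemma hll2 (j : 'I_n.+1) : (lift i j <= lift i (hh (lift i j)))%N.
Proof. by rewrite hh_lift. Qed.

Lemma face_part (k : fieldType) (M : module k (Estr C n)) :
  indecomposable M -> indecomposable (pullback (face C i) M).
Proof.
apply: (@pull_indec k _ _ (face C i) Sfun M eta etai).
- by move=> e; apply: ladder_eq => j /=; apply: P_inv.
- by move=> e; apply: ladder_eq => j /=; apply: P_inv.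
- move=> e e' g; apply: ladder_eq => j /=.
  exact: (P_nat (lcomm g)).
move=> s; case: (ltnP i n.+1) => hi.
  left.
  pose c := @Lad C n.+1 s (Sstr (face_str i s))
     (fun x => P (sobj s) (@smor _ _ s) x (lift i (hh x)) (hh_lo x hi)) (hLO hi s).
  exists c.
  exists (lad_inv (fmap (face C i) c)
            (fun j => P (sobj s) (@smor _ _ s) (lift i (hh (lift i j))) (lift i j) (hll1 j))
            (fun j => @P_inv C n.+1 (sobj s) (@smor _ _ s) _ _ _ _)
            (fun j => @P_inv C n.+1 (sobj s) (@smor _ _ s) _ _ _ _)).
  by apply: ladder_eq => j /=; apply: P_inv.
right.
pose c := @Lad C n.+1 (Sstr (face_str i s)) s
   (fun x => P (sobj s) (@smor _ _ s) (lift i (hh x)) x (hh_hi x hi)) (hHI hi s).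
exists c.
exists (lad_inv (fmap (face C i) c)
          (fun j => P (sobj s) (@smor _ _ s) (lift i j) (lift i (hh (lift i j))) (hll2 j))
          (fun j => @P_inv C n.+1 (sobj s) (@smor _ _ s) _ _ _ _)
            (fun j => @P_inv C n.+1 (sobj s) (@smor _ _ s) _ _ _ _)).
by apply: ladder_eq => j /=; apply: P_inv.
Qed.
End FaceSec.


Theorem lemma3p8 (k : fieldType) (C : category) :
  (forall (n : nat) (M : module k (Estr C n)),
      indecomposable M ->
      forall i : 'I_n.+2, indecomposable (pullback (face C i) M)) /\
  (forall M : module k C,
      indecomposable M ->
      indecomposable (pullback (G1d0 C) M) /\
      indecomposable (pullback (G1d1 C) M)).
Proof.
split.
  by move=> n M hM i; apply: (@face_part C n i k M hM).
by move=> M hM; apply: G1_part.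
Qed.
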